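(* Let $(V,E,\sigma)$ be an influence graph and let $\mu : V \rightarrow \{+,-\}$ be a (partial) vertex labeling. If the disjunctive logic program $P_C\cup\tau((V,E,\sigma),\mu)$ has an answer set, then $(V,E,\sigma)$ and $\mu$ are consistent.
   Context: An influence graph is a triple $(V,E,\sigma)$ where $V$ is a finite set of vertices, $E\subseteq V\times V$ is a set of directed edges (an edge from $j$ to $i$ is written $j\rightarrow i$), and $\sigma : E\rightarrow\{+,-\}$ is a partial labeling of the edges; in addition, some vertices of $V$ are designated as input vertices. Signs are multiplied as numbers ($++=--=+$, $+-=-+=-$). Given a partial vertex labeling $\mu: V\rightarrow\{+,-\}$, the pair $(V,E,\sigma)$ and $\mu$ are called consistent if there exist total extensions $\sigma':E\rightarrow\{+,-\}$ of $\sigma$ and $\mu':V\rightarrow\{+,-\}$ of $\mu$ such that for every non-input vertex $i\in V$ there is an edge $j\rightarrow i$ in $E$ with $\mu'(i)=\mu'(j)\sigma'(j,i)$. Answer set semantics: a disjunctive logic program is a set of rules $a_1;\dots;a_l \leftarrow b_1,\dots,b_m,\mathit{not}\ c_1,\dots,\mathit{not}\ c_n$ (with $l=0$ giving an integrity constraint, whose empty head is false). Rules with (capitalized) variables stand for all their ground instances obtained by substituting constants occurring in the program; a built-in comparison $S\neq T$ in a body keeps only instances where the substituted constants differ. For a set $X$ of ground atoms, the reduct $P^X$ consists of $\{a_1,\dots,a_l\}\leftarrow b_1,\dots,b_m$ for each ground rule with $\{c_1,\dots,c_n\}\cap X=\emptyset$; $X$ is an answer set of $P$ if it is a $\subseteq$-minimal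 model of $P^X$ (a rule is satisfied if some head atom is in $X$ whenever all $b_k$ are in $X$). Here $+$ and $-$ are constants and vertex names are constants. The instance $\tau((V,E,\sigma),\mu)$ is the set of facts: $\mathit{vertex}(i)$ for each $i\in V$; $\mathit{edge}(j,i)$ for each $j\rightarrow i$ in $E$; $\mathit{observedE}(j,i,s)$ whenever $\sigma(j,i)=s$ is defined; $\mathit{observedV}(i,s)$ whenever $\mu(i)=s$ is defined; $\mathit{input}(i)$ for each input vertex $i$. The program $P_C$ consists of the rules $\mathit{labelV}(V,+);\mathit{labelV}(V,-)\leftarrow \mathit{vertex}(V)$; $\mathit{labelE}(U,V,+);\mathit{labelE}(U,V,-)\leftarrow \mathit{edge}(U,V)$; $\mathit{labelV}(V,S)\leftarrow \mathit{observedV}(V,S)$; $\mathit{labelE}(U,V,S)\leftarrow \mathit{observedE}(U,V,S)$; $\mathit{receive}(V,+)\leftarrow \mathit{labelE}(U,V,S),\mathit{labelV}(U,S)$; $\mathit{receive}(V,-)\leftarrow \mathit{labelE}(U,V,S),\mathit{labelV}(U,T),S\neq T$; $\leftarrow \mathit{labelV}(V,S),\mathit{not}\ \mathit{receive}(V,S),\mathit{not}\ \mathit{input}(V)$. *)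

(* Defs.v *)
From mathcomp Require Import all_boot.
From Stdlib Require Import List.
Import ListNotations.
Set Implicit Arguments. Unset Strict Implicit. Unset Printing Implicit Defensive.

Inductive sign := Plus | Minus.
Definition smul (a b : sign) : sign :=
  match a, b with
  | Plus, Plus | Minus, Minus => Plus
  | _, _ => Minus
  end.

(* An influence graph over the finite vertex set V:
   - E : the edge relation, E j i means j -> i;
   - sigma : partial edge labeling (None = undefined), only defined on edges;
   - inp : the designated input vertices. *)
Definition partial_edge_labeling (V : finType) (E : rel V) (sigma : V -> V -> option sign) : Prop :=
  forall j i s, sigma j i = Some s -> E j i.

Definition consistent (V : finType) (E : rel V) (sigma : V -> V -> option sign)
    (inp : pred V) (mu : V -> option sign) : Prop :=
  exists (sigma' : V -> V -> sign) (mu' : V -> sign),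
    (forall j i s, E j i -> sigma j i = Some s -> sigma' j i = s) /\
    (forall i s, mu i = Some s -> mu' i = s) /\
    (forall i, ~~ inp i -> exists j, E j i /\ mu' i = smul (mu' j) (sigma' j i)).

Inductive const (V : Type) := CV of V | CS of sign.
Arguments CS {V}.

Inductive atom (V : Type) :=
| a_vertex of const V
| a_edge of const V & const V
| a_observedE of const V & const V & const V
| a_observedV of const V & const V
| a_input of const V
| a_labelV of const V & const V
| a_labelE of const V & const V & const V
| a_receive of const V & const V.

(* A ground rule  a_1;...;a_l <- b_1,...,b_m, not c_1,...,not c_n  *)
Record rule (A : Type) := Rule { head : list A; pos : list A; neg : list A }.

Definition program (A : Type) := rule A -> Prop.
Definition interp (A : Type) := A -> Prop.

Definition model_of_reduct (A : Type) (P : program A) (X Y : interp A) : Prop :=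
  forall r, P r -> (forall c, In c (neg r) -> ~ X c) ->
    (forall b, In b (pos r) -> Y b) -> exists2 a, In a (head r) & Y a.

Definition answer_set (A : Type) (P : program A) (X : interp A) : Prop :=
  model_of_reduct P X X /\
  forall Y : interp A, (forall a, Y a -> X a) -> model_of_reduct P X Y ->
    forall a, X a -> Y a.

(* Ground instances of P_C (variables range over all constants). *)
Inductive P_C (V : Type) : program (atom V) :=
| PC1 (v : const V) :
    P_C (Rule [a_labelV v (CS Plus); a_labelV v (CS Minus)] [a_vertex v] [])
| PC2 (u v : const V) :
    P_C (Rule [a_labelE u v (CS Plus); a_labelE u v (CS Minus)] [a_edge u v] [])
| PC3 (v s : const V) :
    P_C (Rule [a_labelV v s] [a_observedV v s] [])
| PC4 (u v s : const V) :
    P_C (Rule [a_labelE u v s] [a_observedE u v s] [])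
| PC5 (u v s : const V) :
    P_C (Rule [a_receive v (CS Plus)] [a_labelE u v s; a_labelV u s] [])
| PC6 (u v s t : const V) : s <> t ->
    P_C (Rule [a_receive v (CS Minus)] [a_labelE u v s; a_labelV u t] [])
| PC7 (v s : const V) :
    P_C (Rule [] [a_labelV v s] [a_receive v s; a_input v]).

Inductive tau (V : finType) (E : rel V) (sigma : V -> V -> option sign)
    (inp : pred V) (mu : V -> option sign) : program (atom V) :=
| T_vertex (i : V) : tau E sigma inp mu (Rule [a_vertex (CV i)] [] [])
| T_edge (j i : V) : E j i -> tau E sigma inp mu (Rule [a_edge (CV j) (CV i)] [] [])
| T_obsE (j i : V) (s : sign) : sigma j i = Some s ->
    tau E sigma inp mu (Rule [a_observedE (CV j) (CV i) (CS s)] [] [])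
| T_obsV (i : V) (s : sign) : mu i = Some s ->
    tau E sigma inp mu (Rule [a_observedV (CV i) (CS s)] [] [])
| T_input (i : V) : inp i -> tau E sigma inp mu (Rule [a_input (CV i)] [] []).

Definition union_prog (A : Type) (P Q : program A) : program A := fun r => P r \/ Q r.

(* Main.v *)
Require Import Defs.
From mathcomp Require Import all_boot.
From Stdlib Require Import List ClassicalEpsilon Classical.
Import ListNotations.

Definition pbool (P : Prop) : bool :=
  if excluded_middle_informative P then true else false.

Lemma pboolP (P : Prop) : pbool P = true <-> P.
Proof. rewrite /pbool; case: excluded_middle_informative => //= H; split=> //. Qed.

Section S.
Variables (V : finType) (E : rel V) (sigma : V -> V -> option sign)
    (inp : pred V) (mu : V -> option sign) (X : interp (atom V)).

Definition mu' (i : V) : sign :=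
  match mu i with Some s => s
  | None => if pbool (X (a_labelV (CV i) (CS Plus))) then Plus else Minus end.
Definition sigma' (j i : V) : sign :=
  match sigma j i with Some s => s
  | None => if pbool (X (a_labelE (CV j) (CV i) (CS Plus))) then Plus else Minus end.

Definition Y (a : atom V) : Prop :=
  match a with
  | a_vertex (CV i) => True
  | a_edge (CV j) (CV i) => E j i
  | a_observedE (CV j) (CV i) (CS s) => sigma j i = Some s
  | a_observedV (CV i) (CS s) => mu i = Some s
  | a_input (CV i) => inp i
  | a_labelV (CV i) (CS s) => s = mu' i
  | a_labelE (CV j) (CV i) (CS s) => E j i /\ s = sigma' j i
  | a_receive (CV i) (CS s) => exists j, E j i /\ s = smul (mu' j) (sigma' j i)
  | _ => False
  end.
End S.
Arguments mu' {V} mu X i.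
Arguments sigma' {V} sigma X j i.
Arguments Y {V} E sigma inp mu X a.

Lemma smul_same a : smul a a = Plus. Proof. by case: a. Qed.
Lemma smul_diff a b : a <> b -> smul a b = Minus.
Proof. by case: a; case: b. Qed.

Theorem theorem1 (V : finType) (E : rel V) (sigma : V -> V -> option sign)
    (inp : pred V) (mu : V -> option sign) :
  partial_edge_labeling E sigma ->
  (exists X : interp (atom V), answer_set (union_prog (@P_C V) (tau E sigma inp mu)) X) ->
  consistent E sigma inp mu.
Proof.
move=> Hpe [X [HM Hmin]].
set P := union_prog _ _ in HM Hmin.
have fact : forall a, P (Rule [a] [] []) -> X a.
  move=> a Pa; have [b Hb Xb] := HM _ Pa (fun c (h : In c []) => match h with end)
                                   (fun c (h : In c []) => match h with end).
  by case: Hb => [->|[]].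
have Hv : forall i, X (a_vertex (CV i)) by move=> i; apply: fact; right; constructor.
have He : forall j i, E j i -> X (a_edge (CV j) (CV i)) by move=> j i h; apply: fact; right; constructor.
have rule1 : forall h p, P (Rule [h] p []) -> (forall b, In b p -> X b) -> X h.
  move=> h p Pr Hp; have [b Hb Xb] := HM _ Pr (fun c (h : In c []) => match h with end) Hp.
  by case: Hb => [->|[]].
have HlV : forall i, X (a_labelV (CV i) (CS (mu' mu X i))).
  move=> i; rewrite /mu'; case Hm: (mu i) => [s|].
    apply: (rule1 _ [a_observedV (CV i) (CS s)]); first by left; constructor.
    by move=> b [<-|[]]; apply: fact; right; constructor.
  case Hp: pbool; first by apply/pboolP.
  have [b Hb Xb] := HM _ (or_introl (PC1 (CV i))) (fun c (h : In c []) => match h with end)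
     (fun b (h : In b [a_vertex (CV i)]) => ltac:(case: h => [<-|[]]; apply: Hv)).
  case: Hb => [Hb|[Hb|[]]]; subst b => //.
  by move: Hp => /negbT/negP; case; apply/pboolP.
have HlE : forall j i, E j i -> X (a_labelE (CV j) (CV i) (CS (sigma' sigma X j i))).
  move=> j i Eji; rewrite /sigma'; case Hm: (sigma j i) => [s|].
    apply: (rule1 _ [a_observedE (CV j) (CV i) (CS s)]); first by left; constructor.
    by move=> b [<-|[]]; apply: fact; right; constructor.
  case Hp: pbool; first by apply/pboolP.
  have [b Hb Xb] := HM _ (or_introl (PC2 (CV j) (CV i))) (fun c (h : In c []) => match h with end)
     (fun b (h : In b [a_edge (CV j) (CV i)]) => ltac:(case: h => [<-|[]]; apply: He Eji)).
  case: Hb => [Hb|[Hb|[]]]; subst b => //.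
  by move: Hp => /negbT/negP; case; apply/pboolP.
have YX : forall a, Y E sigma inp mu X a -> X a.
  case=> [c|c d|c d e|c d|c|c d|c d e|c d].
  - by case: c => // i _; apply: Hv.
  - by case: c => // j; case: d => // i; apply: He.
  - case: c => // j; case: d => // i; case: e => // s h.
    by apply: fact; right; constructor.
  - case: c => // i; case: d => // s h.
    by apply: fact; right; constructor.
  - case: c => // i h.
    by apply: fact; right; constructor.
  - by case: c => // i; case: d => // s /= ->; apply: HlV.
  - by case: c => // j; case: d => // i; case: e => // s /= [h ->]; apply: HlE.
  - case: c => // i; case: d => // s /= [j [Eji ->]].
    have L1 := HlE _ _ Eji; have L2 := HlV j.
    case: (classic (sigma' sigma X j i = mu' mu X j)) => Heq.
      rewrite Heq smul_same.
      apply: (rule1 _ _ (or_introl (PC5 (CV j) (CV i) (CS (mu' mu X j))))).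
      by move=> b [<-|[<-|[]]] //; rewrite -Heq.
    have Hne : CS (V:=V) (sigma' sigma X j i) <> CS (mu' mu X j) by move=> [].
    rewrite smul_diff; last by move=> h; apply: Heq.
    apply: (rule1 _ [a_labelE (CV j) (CV i) (CS (sigma' sigma X j i)); a_labelV (CV j) (CS (mu' mu X j))]).
      by left; apply: PC6.
    by move=> b [<-|[<-|[]]].
have HY : model_of_reduct P X (Y E sigma inp mu X).
  move=> r [] Pr Hneg Hpos.
  - case: Pr Hneg Hpos => [v|u v|v s|u v s|u v s|u v s t Hst|v s] Hneg Hpos.
    + have := Hpos _ (or_introl erefl); clear Hneg Hpos; case: v => // i _ /=.
      case Hm: (mu' mu X i).
        by exists (a_labelV (CV i) (CS Plus)); [left|].
      by exists (a_labelV (CV i) (CS Minus)); [right; left|].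
    + have := Hpos _ (or_introl erefl); clear Hneg Hpos; case: u => // j; case: v => // i /= Eji.
      case Hm: (sigma' sigma X j i).
        by exists (a_labelE (CV j) (CV i) (CS Plus)); [left|].
      by exists (a_labelE (CV j) (CV i) (CS Minus)); [right; left|].
    + have := Hpos _ (or_introl erefl); clear Hneg Hpos; case: v => // i; case: s => // s /= Hm.
      exists (a_labelV (CV i) (CS s)); first by left.
      by rewrite /= /mu' Hm.
    + have := Hpos _ (or_introl erefl); clear Hneg Hpos; case: u => // j; case: v => // i; case: s => // s /= Hm.
      exists (a_labelE (CV j) (CV i) (CS s)); first by left.
      by split; [exact: Hpe Hm | rewrite /sigma' Hm].
    + have := Hpos _ (or_introl erefl); have := Hpos _ (or_intror (or_introl erefl)); clear Hneg Hpos.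
      case: u => // j; case: v => // i; case: s => // s /= H1 [Eji H2].
      exists (a_receive (CV i) (CS Plus)); first by left.
      by exists j; split => //; rewrite -H1 -H2 smul_same.
    + have := Hpos _ (or_introl erefl); have := Hpos _ (or_intror (or_introl erefl)); clear Hneg Hpos.
      case: u => // j; case: v => // i; case: s Hst => // s; case: t => // t Hst /= H1 [Eji H2].
      exists (a_receive (CV i) (CS Minus)); first by left.
      exists j; split => //; rewrite -H1 -H2 smul_diff //.
      by move=> h; apply: Hst; rewrite h.
    + have Xl := YX _ (Hpos _ (or_introl erefl)).
      have [b [] //] := HM _ (or_introl (PC7 v s)) Hneg (fun b h => ltac:(case: h => [<-|[]]; exact: Xl)).
  - case: Pr Hneg Hpos => [i|j i Hji|j i s Hs|i s Hs|i Hi] Hneg Hpos.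
    + by exists (a_vertex (CV i)); [left|].
    + by exists (a_edge (CV j) (CV i)); [left|].
    + by exists (a_observedE (CV j) (CV i) (CS s)); [left|].
    + by exists (a_observedV (CV i) (CS s)); [left|].
    + by exists (a_input (CV i)); [left|].
have XY := Hmin _ YX HY.
exists (sigma' sigma X), (mu' mu X); split; [|split].
- by move=> j i s _ Hs; rewrite /sigma' Hs.
- by move=> i s Hs; rewrite /mu' Hs.
- move=> i Hi.
  have Hr : X (a_receive (CV i) (CS (mu' mu X i))).
    apply: NNPP => Hn.
    have Hin : ~ X (a_input (CV i)) by move=> /XY /= h; move: Hi; rewrite h.
    have [b [] //] := HM _ (or_introl (PC7 (CV i) (CS (mu' mu X i))))
      (fun c h => ltac:(case: h => [<-|[<-|[]]] //))
      (fun b h => ltac:(case: h => [<-|[]]; exact: HlV)).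
  have [j [Eji Hj]] := XY _ Hr.
  by exists j.
Qed.
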